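(* Assume the setting of the context. Then $C^{-1}\le\rho(t,x)\le C$ for all $x\in\mathbb{T}^3$ and $0\le t<\overline{T}$, where $C>0$ depends only on $(\rho_0,u_0)$, $C_0$ and $\overline{T}$.
   Context: Parameters: $\gamma>1$, $0<\delta<1$, $\alpha>0$, $A>0$, $\beta=2\alpha(\delta-1)$ with $\alpha+\beta\ge0$. System on the torus $\mathbb{T}^3$: $\rho_t+\mathrm{div}(\rho u)=0$, $(\rho u)_t+\mathrm{div}(\rho u\otimes u)+\nabla(A\rho^\gamma)=\mathrm{div}(2\alpha\rho^\delta D(u)+\beta\rho^\delta\mathrm{div}u\,\mathbb{I}_3)$, $D(u)=\frac12(\nabla u+(\nabla u)^\top)$, $(\rho,u)|_{t=0}=(\rho_0,u_0)$ with $\rho_0>0$, $(\rho_0,u_0)\in H^3(\mathbb{T}^3)$. $(\rho,u)$ is the unique classical solution with $\rho\in C([0,T];H^3)$, $u\in C([0,T];H^3)\cap L^2([0,T];H^4)$ on each $[0,T]$ of existence, with maximal existence time $\overline{T}<\infty$, and it is assumed that $\lim_{T\to\overline{T}}\int_0^T\|D(u)(t)\|^2_{L^\infty(\mathbb{T}^3)}dt=C_0<\infty$. *)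

(* Defs.v *)
From Stdlib Require Import Reals.
From Coquelicot Require Import Coquelicot.
Open Scope R_scope.

(* A space-time scalar field: f t x1 x2 x3.  Points of T^3 are represented by
   points of R^3 and functions are required to be 1-periodic in each x_i. *)
Definition sf := R -> R -> R -> R -> R.
(* A vector field is given by its components u 0, u 1, u 2. *)
Definition vf := nat -> sf.

Definition sum3 (F : nat -> R) : R := F 0%nat + F 1%nat + F 2%nat.
Definition kron (i j : nat) : R := if Nat.eqb i j then 1 else 0.

Definition dt (f : sf) : sf := fun t x y z => Derive (fun s => f s x y z) t.
Definition dx (i : nat) (f : sf) : sf := fun t x y z =>
  match i with
  | 0%nat => Derive (fun s => f t s y z) x
  | 1%nat => Derive (fun s => f t x s z) y
  | _ => Derive (fun s => f t x y s) z
  end.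
Definition ex_dx (i : nat) (f : sf) (t x y z : R) : Prop :=
  match i with
  | 0%nat => ex_derive (fun s => f t s y z) x
  | 1%nat => ex_derive (fun s => f t x s z) y
  | _ => ex_derive (fun s => f t x y s) z
  end.

Definition cont_on (P : R -> Prop) (f : sf) : Prop :=
  forall t x y z, P t -> forall eps : posreal, exists del : posreal,
    forall t' x' y' z', P t' ->
      Rabs (t' - t) < del -> Rabs (x' - x) < del -> Rabs (y' - y) < del ->
      Rabs (z' - z) < del -> Rabs (f t' x' y' z' - f t x y z) < eps.

Definition periodic (f : sf) : Prop :=
  forall t x y z, f t (x + 1) y z = f t x y z /\ f t x (y + 1) z = f t x y z
                  /\ f t x y (z + 1) = f t x y z.

Definition Dsym (u : vf) (i j : nat) : sf := fun t x y z =>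
  (dx j (u i) t x y z + dx i (u j) t x y z) / 2.
Definition divu (u : vf) : sf := fun t x y z => sum3 (fun i => dx i (u i) t x y z).

Definition normD (u : vf) : sf := fun t x y z =>
  sqrt (sum3 (fun i => sum3 (fun j => (Dsym u i j t x y z) ^ 2))).
Definition LinfD (u : vf) (t : R) : Rbar :=
  Lub_Rbar (fun r => exists x y z, r = normD u t x y z).

(* Classical-regularity solution of the degenerate compressible Navier-Stokes
   system on [0,T) x T^3 with initial data (rho0,u0). *)
Definition cns_solution (gam del alp A bet : R)
  (rho0 : R -> R -> R -> R) (u0 : nat -> R -> R -> R -> R)
  (T : R) (rho : sf) (u : vf) : Prop :=
  let I0 := fun t => 0 <= t < T in
  let I := fun t => 0 < t < T in
  periodic rho /\ (forall i, (i < 3)%nat -> periodic (u i)) /\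
  (forall t x y z, I0 t -> 0 < rho t x y z) /\
  (forall x y z, rho 0 x y z = rho0 x y z) /\
  (forall i x y z, (i < 3)%nat -> u i 0 x y z = u0 i x y z) /\
  cont_on I0 rho /\ (forall i, (i < 3)%nat -> cont_on I0 (u i)) /\
  (forall i, (i < 3)%nat ->
     (forall t x y z, I0 t -> ex_dx i rho t x y z) /\ cont_on I0 (dx i rho)) /\
  (forall i j, (i < 3)%nat -> (j < 3)%nat ->
     (forall t x y z, I0 t -> ex_dx j (u i) t x y z) /\ cont_on I0 (dx j (u i))) /\
  (forall t x y z, I t -> ex_derive (fun s => rho s x y z) t) /\ cont_on I (dt rho) /\
  (forall i, (i < 3)%nat ->
     (forall t x y z, I t -> ex_derive (fun s => u i s x y z) t) /\ cont_on I (dt (u i))) /\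
  (forall i j k, (i < 3)%nat -> (j < 3)%nat -> (k < 3)%nat ->
     (forall t x y z, I t -> ex_dx k (dx j (u i)) t x y z) /\
     cont_on I (dx k (dx j (u i)))) /\
  (forall t x y z, I t ->
     dt rho t x y z
     + sum3 (fun j => dx j (fun t x y z => rho t x y z * u j t x y z) t x y z) = 0) /\
  (forall i t x y z, (i < 3)%nat -> I t ->
     dt (fun t x y z => rho t x y z * u i t x y z) t x y z
     + sum3 (fun j => dx j (fun t x y z => rho t x y z * u i t x y z * u j t x y z) t x y z)
     + dx i (fun t x y z => A * Rpower (rho t x y z) gam) t x y z
     = sum3 (fun j => dx j (fun t x y z =>
          2 * alp * Rpower (rho t x y z) del * Dsym u i j t x y z
          + bet * Rpower (rho t x y z) del * divu u t x y z * kron i j) t x y z)).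

(* Main.v *)
Require Import Defs.
From Stdlib Require Import Reals Lra Lia ZArith ClassicalEpsilon Classical.
From Coquelicot Require Import Coquelicot.
Open Scope R_scope.

Definition S4 := R -> R -> R -> R -> Prop.

Definition inb (c0 c1 c2 c3 h0 h1 h2 h3 : R) : S4 := fun t x y z =>
  c0 <= t <= c0 + h0 /\ c1 <= x <= c1 + h1 /\ c2 <= y <= c2 + h2 /\ c3 <= z <= c3 + h3.

Definition PP (f : R -> R -> R -> R -> R) (K S : S4) : Prop :=
  forall r, (exists t x y z, K t x y z /\ f t x y z < r) ->
            exists t x y z, S t x y z /\ f t x y z < r.

Lemma PP_union f K (S S1 S2 : S4) :
  (forall t x y z, S t x y z -> S1 t x y z \/ S2 t x y z) ->
  PP f K S -> PP f K S1 \/ PP f K S2.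
Proof.
  intros HS HP.
  destruct (classic (PP f K S1)) as [H1|H1]; [now left|].
  destruct (classic (PP f K S2)) as [H2|H2]; [now right|].
  exfalso.
  unfold PP in H1, H2.
  apply not_all_ex_not in H1 as [r1 H1].
  apply not_all_ex_not in H2 as [r2 H2].
  apply imply_to_and in H1 as [[t1 [x1 [y1 [z1 [K1 F1]]]]] N1].
  apply imply_to_and in H2 as [[t2 [x2 [y2 [z2 [K2 F2]]]]] N2].
  destruct (Rle_dec (f t1 x1 y1 z1) (f t2 x2 y2 z2)) as [Hle|Hle].
  - destruct (HP (Rmin r1 r2)) as [t [x [y [z [Hs Hf]]]]].
    { exists t1, x1, y1, z1. split; auto. apply Rmin_glb_lt; lra. }
    destruct (HS _ _ _ _ Hs) as [Hs1|Hs2].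
    + apply N1. exists t, x, y, z. split; auto. pose proof (Rmin_l r1 r2). lra.
    + apply N2. exists t, x, y, z. split; auto. pose proof (Rmin_r r1 r2). lra.
  - destruct (HP (Rmin r1 r2)) as [t [x [y [z [Hs Hf]]]]].
    { exists t2, x2, y2, z2. split; auto. apply Rmin_glb_lt; lra. }
    destruct (HS _ _ _ _ Hs) as [Hs1|Hs2].
    + apply N1. exists t, x, y, z. split; auto. pose proof (Rmin_l r1 r2). lra.
    + apply N2. exists t, x, y, z. split; auto. pose proof (Rmin_r r1 r2). lra.
Qed.


Lemma split0 f K c0 c1 c2 c3 h0 h1 h2 h3 : 0 <= h0 ->
  PP f K (inb c0 c1 c2 c3 h0 h1 h2 h3) ->
  exists d, c0 <= d <= c0 + h0 / 2 /\ PP f K (inb d c1 c2 c3 (h0/2) h1 h2 h3).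
Proof.
  intros Hh HP.
  destruct (PP_union f K (inb c0 c1 c2 c3 h0 h1 h2 h3) (inb c0 c1 c2 c3 (h0/2) h1 h2 h3) (inb (c0 + h0/2) c1 c2 c3 (h0/2) h1 h2 h3) ) as [H|H]; [|exact HP| |].
  - intros t x y z (A & B & C & D).
    destruct (Rle_dec t (c0 + h0/2)); [left|right]; unfold inb; repeat split; lra.
  - exists c0. split; [lra|exact H].
  - exists (c0 + h0/2). split; [lra|exact H].
Qed.

Lemma split1 f K c0 c1 c2 c3 h0 h1 h2 h3 : 0 <= h1 ->
  PP f K (inb c0 c1 c2 c3 h0 h1 h2 h3) ->
  exists d, c1 <= d <= c1 + h1 / 2 /\ PP f K (inb c0 d c2 c3 h0 (h1/2) h2 h3).
Proof.
  intros Hh HP.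
  destruct (PP_union f K (inb c0 c1 c2 c3 h0 h1 h2 h3) (inb c0 c1 c2 c3 h0 (h1/2) h2 h3) (inb c0 (c1 + h1/2) c2 c3 h0 (h1/2) h2 h3) ) as [H|H]; [|exact HP| |].
  - intros t x y z (A & B & C & D).
    destruct (Rle_dec x (c1 + h1/2)); [left|right]; unfold inb; repeat split; lra.
  - exists c1. split; [lra|exact H].
  - exists (c1 + h1/2). split; [lra|exact H].
Qed.

Lemma split2 f K c0 c1 c2 c3 h0 h1 h2 h3 : 0 <= h2 ->
  PP f K (inb c0 c1 c2 c3 h0 h1 h2 h3) ->
  exists d, c2 <= d <= c2 + h2 / 2 /\ PP f K (inb c0 c1 d c3 h0 h1 (h2/2) h3).
Proof.
  intros Hh HP.
  destruct (PP_union f K (inb c0 c1 c2 c3 h0 h1 h2 h3) (inb c0 c1 c2 c3 h0 h1 (h2/2) h3) (inb c0 c1 (c2 + h2/2) c3 h0 h1 (h2/2) h3) ) as [H|H]; [|exact HP| |].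
  - intros t x y z (A & B & C & D).
    destruct (Rle_dec y (c2 + h2/2)); [left|right]; unfold inb; repeat split; lra.
  - exists c2. split; [lra|exact H].
  - exists (c2 + h2/2). split; [lra|exact H].
Qed.

Lemma split3 f K c0 c1 c2 c3 h0 h1 h2 h3 : 0 <= h3 ->
  PP f K (inb c0 c1 c2 c3 h0 h1 h2 h3) ->
  exists d, c3 <= d <= c3 + h3 / 2 /\ PP f K (inb c0 c1 c2 d h0 h1 h2 (h3/2)).
Proof.
  intros Hh HP.
  destruct (PP_union f K (inb c0 c1 c2 c3 h0 h1 h2 h3) (inb c0 c1 c2 c3 h0 h1 h2 (h3/2)) (inb c0 c1 c2 (c3 + h3/2) h0 h1 h2 (h3/2)) ) as [H|H]; [|exact HP| |].
  - intros t x y z (A & B & C & D).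
    destruct (Rle_dec z (c3 + h3/2)); [left|right]; unfold inb; repeat split; lra.
  - exists c3. split; [lra|exact H].
  - exists (c3 + h3/2). split; [lra|exact H].
Qed.

Lemma half_pow w n : w * (/2)^n / 2 = w * (/2)^(S n).
Proof. simpl. field. Qed.

Lemma pow_half_pos n : 0 < (/2)^n.
Proof. apply pow_lt. lra. Qed.

Lemma step4 f K c0 c1 c2 c3 w0 w1 w2 w3 n :
  0 <= w0 -> 0 <= w1 -> 0 <= w2 -> 0 <= w3 ->
  PP f K (inb c0 c1 c2 c3 (w0*(/2)^n) (w1*(/2)^n) (w2*(/2)^n) (w3*(/2)^n)) ->
  exists d0 d1 d2 d3,
    (c0 <= d0 <= c0 + w0*(/2)^(S n)) /\ (c1 <= d1 <= c1 + w1*(/2)^(S n)) /\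
    (c2 <= d2 <= c2 + w2*(/2)^(S n)) /\ (c3 <= d3 <= c3 + w3*(/2)^(S n)) /\
    PP f K (inb d0 d1 d2 d3 (w0*(/2)^(S n)) (w1*(/2)^(S n)) (w2*(/2)^(S n)) (w3*(/2)^(S n))).
Proof.
  intros H0 H1 H2 H3 HP.
  pose proof (pow_half_pos n) as Hp.
  assert (A0: 0 <= w0*(/2)^n) by nra. assert (A1: 0 <= w1*(/2)^n) by nra.
  assert (A2: 0 <= w2*(/2)^n) by nra. assert (A3: 0 <= w3*(/2)^n) by nra.
  destruct (split0 _ _ _ _ _ _ _ _ _ _ A0 HP) as [d0 [B0 P0]].
  destruct (split1 _ _ _ _ _ _ _ _ _ _ A1 P0) as [d1 [B1 P1]].
  destruct (split2 _ _ _ _ _ _ _ _ _ _ A2 P1) as [d2 [B2 P2]].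
  destruct (split3 _ _ _ _ _ _ _ _ _ _ A3 P2) as [d3 [B3 P3]].
  rewrite !half_pow in *.
  exists d0, d1, d2, d3. tauto.
Qed.

Record pt := Pt { q0 : R; q1 : R; q2 : R; q3 : R }.

Fixpoint iter_pt (F : nat -> pt -> pt) (a : pt) (n : nat) : pt :=
  match n with O => a | S m => F m (iter_pt F a m) end.

Lemma seq_lim (u : nat -> R) w : 0 <= w ->
  (forall n, u n <= u (S n) <= u n + w * (/2)^(S n)) ->
  exists l, forall n, u 0%nat <= u n /\ u n <= l <= u n + w * (/2)^n /\
     u n + w * (/2)^n <= u 0%nat + w.
Proof.
  intros Hw Hu.
  set (v := fun n => u n + w * (/2)^n).
  assert (Hv : forall n, v (S n) <= v n).
  { intros n. unfold v. specialize (Hu n). simpl in *.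
    pose proof (pow_half_pos n). lra. }
  assert (Hvk : forall n k, v (k + n)%nat <= v n).
  { intros n k. induction k. simpl. lra. simpl. specialize (Hv (k+n)%nat). lra. }
  assert (Huv : forall n, u n <= v n).
  { intros n. unfold v. pose proof (pow_half_pos n). nra. }
  assert (Hg : Un_growing u) by (intros n; apply Hu).
  assert (Hu0 : forall n, u 0%nat <= u n).
  { induction n. lra. specialize (Hu n). lra. }
  destruct (growing_cv u Hg) as [l Hl].
  { exists (v 0%nat). intros r [n ->]. specialize (Hvk 0%nat n). rewrite Nat.add_0_r in Hvk.
    specialize (Huv n). lra. }
  exists l. intros n. repeat split.
  - apply Hu0.
  - apply (growing_ineq u l Hg Hl).
  - destruct (Rle_dec l (v n)) as [h|h]; [unfold v in h; lra|].
    exfalso. destruct (Hl (l - v n)) as [N HN]; [lra|].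
    specialize (HN (N + n)%nat ltac:(lia)). unfold R_dist in HN.
    specialize (Hvk n N). specialize (Huv (N+n)%nat).
    apply Rabs_def2 in HN. lra.
  - specialize (Hvk 0%nat n). rewrite Nat.add_0_r in Hvk. unfold v in Hvk. rewrite pow_O in Hvk. lra.
Qed.

Definition lsc_on (f : R -> R -> R -> R -> R) (K : S4) : Prop :=
  forall t x y z, K t x y z -> forall eps, 0 < eps -> exists del, 0 < del /\
    forall t' x' y' z', K t' x' y' z' -> Rabs (t' - t) < del -> Rabs (x' - x) < del ->
      Rabs (y' - y) < del -> Rabs (z' - z) < del -> f t x y z - eps < f t' x' y' z'.

Lemma min4 f a0 a1 a2 a3 w0 w1 w2 w3 :
  0 <= w0 -> 0 <= w1 -> 0 <= w2 -> 0 <= w3 ->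
  lsc_on f (inb a0 a1 a2 a3 w0 w1 w2 w3) ->
  exists t x y z, inb a0 a1 a2 a3 w0 w1 w2 w3 t x y z /\
    forall t' x' y' z', inb a0 a1 a2 a3 w0 w1 w2 w3 t' x' y' z' -> f t x y z <= f t' x' y' z'.
Proof.
  intros H0 H1 H2 H3 Hl.
  set (K := inb a0 a1 a2 a3 w0 w1 w2 w3).
  set (B := fun (c : pt) n => inb (q0 c) (q1 c) (q2 c) (q3 c)
              (w0*(/2)^n) (w1*(/2)^n) (w2*(/2)^n) (w3*(/2)^n)).
  set (Q := fun (c d : pt) n =>
    (q0 c <= q0 d <= q0 c + w0*(/2)^(S n)) /\ (q1 c <= q1 d <= q1 c + w1*(/2)^(S n)) /\
    (q2 c <= q2 d <= q2 c + w2*(/2)^(S n)) /\ (q3 c <= q3 d <= q3 c + w3*(/2)^(S n))).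
  assert (Hex : forall n c, exists d, PP f K (B c n) -> Q c d n /\ PP f K (B d (S n))).
  { intros n c. destruct (classic (PP f K (B c n))) as [HP|HP].
    - destruct (step4 f K (q0 c) (q1 c) (q2 c) (q3 c) w0 w1 w2 w3 n H0 H1 H2 H3 HP)
        as [d0 [d1 [d2 [d3 Hd]]]].
      exists (Pt d0 d1 d2 d3). intros _. unfold Q, B. simpl. tauto.
    - exists c. intros; contradiction. }
  set (F := fun n c => proj1_sig (constructive_indefinite_description _ (Hex n c))).
  assert (HF : forall n c, PP f K (B c n) -> Q c (F n c) n /\ PP f K (B (F n c) (S n))).
  { intros n c. unfold F. destruct (constructive_indefinite_description _ (Hex n c)). simpl. auto. }
  set (a := Pt a0 a1 a2 a3).
  set (cs := iter_pt F a).
  assert (HP : forall n, PP f K (B (cs n) n)).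
  { induction n.
    - intros r [t [x [y [z [Hk Hf]]]]]. exists t, x, y, z. split; auto.
      unfold B, K, inb in *. simpl. rewrite !Rmult_1_r. auto.
    - simpl. apply HF. exact IHn. }
  assert (HQ : forall n, Q (cs n) (cs (S n)) n).
  { intros n. simpl. apply HF. apply HP. }
  destruct (seq_lim (fun n => q0 (cs n)) w0 H0) as [l0 L0]; [intros n; apply HQ|].
  destruct (seq_lim (fun n => q1 (cs n)) w1 H1) as [l1 L1]; [intros n; apply HQ|].
  destruct (seq_lim (fun n => q2 (cs n)) w2 H2) as [l2 L2]; [intros n; apply HQ|].
  destruct (seq_lim (fun n => q3 (cs n)) w3 H3) as [l3 L3]; [intros n; apply HQ|].
  simpl in L0, L1, L2, L3.
  assert (HK : K l0 l1 l2 l3).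
  { destruct (L0 0%nat) as [_ [A _]]; destruct (L1 0%nat) as [_ [B1 _]];
    destruct (L2 0%nat) as [_ [C _]]; destruct (L3 0%nat) as [_ [D _]].
    simpl in *. rewrite !Rmult_1_r in *. unfold K, inb. lra. }
  exists l0, l1, l2, l3. split; [exact HK|].
  intros t x y z Hq.
  destruct (Rle_dec (f l0 l1 l2 l3) (f t x y z)) as [h|h]; [exact h|exfalso].
  apply Rnot_le_lt in h.
  set (eps := (f l0 l1 l2 l3 - f t x y z) / 2).
  destruct (Hl l0 l1 l2 l3 HK eps) as [del [Hdel Hd]]; [unfold eps; lra|].
  set (W := w0 + w1 + w2 + w3).
  destruct (pow_lt_1_zero (/2) ltac:(rewrite Rabs_pos_eq; lra) (del / (W + 1)))
    as [N HN].
  { apply Rdiv_lt_0_compat; unfold W; lra. }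
  specialize (HN N (le_n N)).
  pose proof (pow_half_pos N) as Hpos.
  rewrite Rabs_pos_eq in HN by lra.
  assert (HWe : W * (/2)^N < del).
  { apply Rmult_lt_compat_r with (r := W + 1) in HN; [|unfold W; lra].
    unfold Rdiv in HN. rewrite Rmult_assoc, Rinv_l, Rmult_1_r in HN by (unfold W; lra).
    nra. }
  assert (E0 : w0 * (/2)^N < del) by (unfold W in HWe; nra).
  assert (E1 : w1 * (/2)^N < del) by (unfold W in HWe; nra).
  assert (E2 : w2 * (/2)^N < del) by (unfold W in HWe; nra).
  assert (E3 : w3 * (/2)^N < del) by (unfold W in HWe; nra).
  destruct (HP N (f l0 l1 l2 l3 - eps)) as [t' [x' [y' [z' [Hb Hf]]]]].
  { exists t, x, y, z. split; auto. unfold eps; lra. }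
  destruct (L0 N) as [A0 [A1 A2]]; destruct (L1 N) as [B0 [B1' B2]];
  destruct (L2 N) as [C0 [C1 C2]]; destruct (L3 N) as [D0 [D1 D2]].
  unfold B, inb in Hb. simpl in A0, B0, C0, D0. simpl in A2, B2, C2, D2, A1, B1', C1, D1.
  assert (Hk' : K t' x' y' z') by (unfold K, inb; lra).
  specialize (Hd t' x' y' z' Hk').
  assert (Rabs (t' - l0) < del) by (apply Rabs_def1; lra).
  assert (Rabs (x' - l1) < del) by (apply Rabs_def1; lra).
  assert (Rabs (y' - l2) < del) by (apply Rabs_def1; lra).
  assert (Rabs (z' - l3) < del) by (apply Rabs_def1; lra).
  specialize (Hd H H4 H5 H6). lra.
Qed.

Lemma shift_nat (h : R -> R) : (forall s, h (s + 1) = h s) ->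
  forall n x, h (x + INR n) = h x.
Proof.
  intros Hh n. induction n; intros x.
  - simpl. now rewrite Rplus_0_r.
  - rewrite S_INR. replace (x + (INR n + 1)) with ((x + INR n) + 1) by ring.
    rewrite Hh. apply IHn.
Qed.

Lemma shift_Z (h : R -> R) : (forall s, h (s + 1) = h s) ->
  forall k x, h (x + IZR k) = h x.
Proof.
  intros Hh k x. destruct (Z_le_gt_dec 0 k) as [Hk|Hk].
  - rewrite <- (Z2Nat.id k Hk), <- INR_IZR_INZ. apply shift_nat; auto.
  - assert (Hk' : (0 <= - k)%Z) by lia.
    replace (IZR k) with (- IZR (- k)) by (rewrite opp_IZR; ring).
    rewrite <- (Z2Nat.id (- k) Hk'), <- INR_IZR_INZ.
    rewrite <- (shift_nat h Hh (Z.to_nat (- k)) (x + - INR (Z.to_nat (- k)))).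
    f_equal. ring.
Qed.

Lemma red1 (h : R -> R) : (forall s, h (s + 1) = h s) ->
  forall x, exists x', 0 <= x' <= 1 /\ h x = h x'.
Proof.
  intros Hh x. destruct (archimed x) as [A B].
  exists (x - IZR (up x) + 1). split; [lra|].
  rewrite <- (shift_Z h Hh (up x - 1) (x - IZR (up x) + 1)).
  f_equal. rewrite minus_IZR. ring.
Qed.

Lemma per_red (f : sf) : periodic f -> forall t x y z,
  exists x' y' z', 0 <= x' <= 1 /\ 0 <= y' <= 1 /\ 0 <= z' <= 1 /\
    f t x y z = f t x' y' z'.
Proof.
  intros Hp t x y z.
  destruct (red1 (fun s => f t s y z) (fun s => proj1 (Hp t s y z)) x) as [x' [Hx Ex]].
  destruct (red1 (fun s => f t x' s z) (fun s => proj1 (proj2 (Hp t x' s z))) y) as [y' [Hy Ey]].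
  destruct (red1 (fun s => f t x' y' s) (fun s => proj2 (proj2 (Hp t x' y' s))) z) as [z' [Hz Ez]].
  exists x', y', z'. repeat split; try lra; simpl in *; congruence.
Qed.

Lemma deriv_min0 (h : R -> R) c l : is_derive h c l -> (forall s, h c <= h s) -> l = 0.
Proof.
  intros Hd Hm. apply is_derive_Reals in Hd.
  pose (pr := exist (fun l => derivable_pt_lim h c l) l Hd : derivable_pt h c).
  change l with (derive_pt h c pr).
  apply (deriv_minimum h (c - 1) (c + 1) c pr); try lra.
  intros; apply Hm.
Qed.

Lemma alg3 (D : nat -> nat -> R) :
  (D 0%nat 0%nat + D 1%nat 1%nat + D 2%nat 2%nat) ^ 2 <= 3 * sum3 (fun i => sum3 (fun j => D i j ^ 2)).
Proof.
  unfold sum3.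
  pose proof (pow2_ge_0 (D 0%nat 1%nat)). pose proof (pow2_ge_0 (D 0%nat 2%nat)).
  pose proof (pow2_ge_0 (D 1%nat 0%nat)). pose proof (pow2_ge_0 (D 1%nat 2%nat)).
  pose proof (pow2_ge_0 (D 2%nat 0%nat)). pose proof (pow2_ge_0 (D 2%nat 1%nat)).
  pose proof (pow2_ge_0 (D 0%nat 0%nat - D 1%nat 1%nat)).
  pose proof (pow2_ge_0 (D 0%nat 0%nat - D 2%nat 2%nat)).
  pose proof (pow2_ge_0 (D 2%nat 2%nat - D 1%nat 1%nat)).
  nra.
Qed.

Lemma divu_bound (u : vf) t x y z : is_finite (LinfD u t) ->
  Rabs (divu u t x y z) <= (1 + 3 * (real (LinfD u t)) ^ 2) / 2.
Proof.
  intros Hf.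
  set (D := fun i j => Dsym u i j t x y z).
  assert (Ed : divu u t x y z = D 0%nat 0%nat + D 1%nat 1%nat + D 2%nat 2%nat).
  { unfold D, divu, Dsym, sum3. field. }
  set (S := sum3 (fun i => sum3 (fun j => D i j ^ 2))).
  assert (HS : 0 <= S).
  { unfold S, sum3. repeat apply Rplus_le_le_0_compat; apply pow2_ge_0. }
  assert (En : normD u t x y z = sqrt S) by reflexivity.
  assert (Hle : normD u t x y z <= real (LinfD u t)).
  { destruct (Lub_Rbar_correct (fun r => exists x y z, r = normD u t x y z)) as [Hub _].
    specialize (Hub (normD u t x y z) (ex_intro _ x (ex_intro _ y (ex_intro _ z eq_refl)))).
    unfold LinfD. unfold LinfD in Hf. rewrite <- Hf in Hub. exact Hub. }
  assert (Hn0 : 0 <= normD u t x y z) by (rewrite En; apply sqrt_pos).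
  assert (Hsq : normD u t x y z ^ 2 = S) by (rewrite En; simpl; rewrite Rmult_1_r; apply sqrt_sqrt; auto).
  pose proof (alg3 D) as Ha. fold S in Ha. rewrite <- Ed in Ha.
  assert (Hab : Rabs (divu u t x y z) <= (1 + (divu u t x y z)^2) / 2).
  { pose proof (pow2_ge_0 (Rabs (divu u t x y z) - 1)).
    rewrite <- (pow2_abs (divu u t x y z)). nra. }
  nra.
Qed.

Lemma ex_g (q : R -> R) a b : ex_RInt q a b -> ex_RInt (fun s => (1 + 3 * q s) / 2) a b.
Proof.
  intros H.
  apply (ex_RInt_ext (fun s => plus (/2) (scal (3/2) (q s)))).
  - intros x _. change (@eq R (Rplus (/2) (Rmult (3/2) (q x))) ((1 + 3 * q x) / 2)). field.
  - apply (@ex_RInt_plus R_NormedModule (fun _ => /2) (fun s => scal (3/2) (q s))).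
    apply ex_RInt_const. apply (@ex_RInt_scal R_NormedModule). exact H.
Qed.

Lemma RInt_g (q : R -> R) a b : ex_RInt q a b ->
  RInt (fun s => (1 + 3 * q s) / 2) a b = (b - a) / 2 + 3 / 2 * RInt q a b.
Proof.
  intros H.
  rewrite (@RInt_ext R_CompleteNormedModule _ (fun s => plus (/2) (scal (3/2) (q s)))).
  - rewrite (@RInt_plus R_CompleteNormedModule (fun _ => /2) (fun s => scal (3/2) (q s))).
    rewrite (@RInt_const R_CompleteNormedModule).
    rewrite (@RInt_scal R_CompleteNormedModule).
    change (@eq R (Rplus (Rmult (b - a) (/2)) (Rmult (3/2) (RInt q a b))) ((b - a) / 2 + 3 / 2 * RInt q a b)). field.
    exact H. apply ex_RInt_const. apply (@ex_RInt_scal R_NormedModule). exact H.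
  - intros x _. change (@eq R ((1 + 3 * q x) / 2) (Rplus (/2) (Rmult (3/2) (q x)))). field.
Qed.

Lemma RInt_split (f : R -> R) a b : 0 <= a <= b -> ex_RInt f 0 b ->
  RInt f 0 b = RInt f 0 a + RInt f a b.
Proof.
  intros Hab H.
  rewrite <- (@RInt_Chasles R_CompleteNormedModule f 0 a b).
  - reflexivity.
  - apply (ex_RInt_Chasles_1 f 0 a b); auto; lra.
  - apply (ex_RInt_Chasles_2 f 0 a b); auto; lra.
Qed.

Lemma ex_sub (f : R -> R) a b c : 0 <= a <= b -> b <= c -> ex_RInt f 0 c -> ex_RInt f a b.
Proof.
  intros H1 H2 H.
  apply (ex_RInt_Chasles_1 f a b c); [lra|].
  apply (ex_RInt_Chasles_2 f 0 a c); [lra|exact H].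
Qed.

Lemma RInt_lower (f : R -> R) a b c : a <= b -> ex_RInt f a b ->
  (forall s, a < s < b -> c <= f s) -> (b - a) * c <= RInt f a b.
Proof.
  intros Hab H Hc.
  assert (E : RInt (fun _ => c) a b = (b - a) * c).
  { rewrite (@RInt_const R_CompleteNormedModule). reflexivity. }
  rewrite <- E. apply RInt_le; auto. apply ex_RInt_const.
Qed.

Lemma exp_le (x y : R) : x <= y -> exp x <= exp y.
Proof. intros H. destruct (Rle_lt_or_eq_dec x y H) as [h|h]. left; now apply exp_increasing. subst; lra. Qed.

Lemma dx_mult j (f g : sf) t x y z : ex_dx j f t x y z -> ex_dx j g t x y z ->
  dx j (fun t x y z => f t x y z * g t x y z) t x y z =
  dx j f t x y z * g t x y z + f t x y z * dx j g t x y z.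
Proof.
  unfold dx, ex_dx. destruct j as [|[|j]]; intros; apply (Derive_mult (fun s => f _ _ _ s) (fun s => g _ _ _ s)) || apply (Derive_mult (fun s => f _ _ s _) (fun s => g _ _ s _)) || apply (Derive_mult (fun s => f _ s _ _) (fun s => g _ s _ _)); auto.
Qed.

Lemma ln_cont (r : R) : 0 < r -> forall eps, 0 < eps -> exists alp, 0 < alp /\
  forall r', Rabs (r' - r) < alp -> Rabs (ln r' - ln r) < eps.
Proof.
  intros Hr eps He.
  assert (Hc : continuity_pt ln r).
  { apply derivable_continuous_pt. exists (/r). apply derivable_pt_lim_ln; auto. }
  destruct (Hc eps He) as [alp [Ha H]].
  exists alp. split; auto. intros r' Hr'.
  destruct (Req_dec r' r) as [E|E].
  - subst. rewrite Rminus_diag, Rabs_R0. auto.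
  - apply (H r'). split; [split; [exact I| auto]|exact Hr'].
Qed.

Lemma Rabs_sig (s v : R) : s = 1 \/ s = -1 -> s * v <= Rabs v.
Proof. intros [-> | ->]; [pose proof (Rle_abs v)|pose proof (Rle_abs (-v)); rewrite Rabs_Ropp in H]; lra. Qed.

Lemma Rabs_sig_eq (s v : R) : s = 1 \/ s = -1 -> Rabs (s * v) = Rabs v.
Proof. intros [-> | ->]. now rewrite Rmult_1_l. replace (-1 * v) with (- v) by ring. apply Rabs_Ropp. Qed.

Lemma deriv_zero_ln (sg : R) (h : R -> R) c : sg = 1 \/ sg = -1 -> 0 < h c -> ex_derive h c ->
  (forall s, sg * ln (h c) <= sg * ln (h s)) -> Derive h c = 0.
Proof.
  intros Hs Hc Hex Hm.
  assert (Hd : is_derive (fun s => sg * ln (h s)) c (sg * (Derive h c * / h c))).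
  { apply is_derive_scal.
    apply (is_derive_comp ln h c (/ h c) (Derive h c)).
    - apply is_derive_Reals. apply derivable_pt_lim_ln. exact Hc.
    - apply Derive_correct. exact Hex. }
  apply deriv_min0 in Hd; [|exact Hm].
  assert (Hi : 0 < / h c) by (apply Rinv_0_lt_compat; auto).
  destruct Hs as [-> | ->]; nra.
Qed.

Lemma five_min (a b c d e : R) : 0 < a -> 0 < b -> 0 < c -> 0 < d -> 0 < e ->
  exists h, 0 < h /\ h < a /\ h < b /\ h < c /\ h < d /\ h < e.
Proof.
  intros. set (m := Rmin (Rmin a b) (Rmin (Rmin c d) e)).
  assert (m <= a /\ m <= b /\ m <= c /\ m <= d /\ m <= e /\ 0 < m).
  { unfold m. pose proof (Rmin_l (Rmin a b) (Rmin (Rmin c d) e)).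
    pose proof (Rmin_r (Rmin a b) (Rmin (Rmin c d) e)).
    pose proof (Rmin_l a b). pose proof (Rmin_r a b). pose proof (Rmin_l (Rmin c d) e).
    pose proof (Rmin_r (Rmin c d) e). pose proof (Rmin_l c d). pose proof (Rmin_r c d).
    repeat split; try lra.
    apply Rmin_glb_lt; apply Rmin_glb_lt; try apply Rmin_glb_lt; auto. }
  exists (m / 2). lra.
Qed.

Theorem lemma5p1 (gam del alp A bet : R)
  (rho0 : R -> R -> R -> R) (u0 : nat -> R -> R -> R -> R)
  (rho : sf) (u : vf) (Tbar C0 : R) :
  1 < gam -> 0 < del < 1 -> 0 < alp -> 0 < A ->
  bet = 2 * alp * (del - 1) -> 0 <= alp + bet ->
  (forall x y z, 0 < rho0 x y z) ->
  0 < Tbar ->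
  cns_solution gam del alp A bet rho0 u0 Tbar rho u ->
  (* uniqueness on every [0,T], T <= Tbar *)
  (forall T rho' u', 0 < T <= Tbar ->
     cns_solution gam del alp A bet rho0 u0 T rho' u' ->
     forall t x y z, 0 <= t < T ->
       rho' t x y z = rho t x y z /\
       (forall i, (i < 3)%nat -> u' i t x y z = u i t x y z)) ->
  (* Tbar is the maximal existence time *)
  ~ (exists T' rho' u', Tbar < T' /\
       cns_solution gam del alp A bet rho0 u0 T' rho' u') ->
  (* lim_{T -> Tbar} int_0^T ||D(u)(t)||_{L^oo}^2 dt = C0 < oo *)
  (forall t, 0 <= t < Tbar -> is_finite (LinfD u t)) ->
  (forall T, 0 <= T < Tbar -> ex_RInt (fun t => (real (LinfD u t)) ^ 2) 0 T) ->
  filterlim (fun T => RInt (fun t => (real (LinfD u t)) ^ 2) 0 T)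
    (at_left Tbar) (locally C0) ->
  exists C, 0 < C /\
    forall t x y z, 0 <= t < Tbar -> / C <= rho t x y z <= C.
Proof.
  intros Hg Hd Ha HA Hb Hab Hr0 HT Hsol Huniq Hmax Hfin Hint Hlim.
  unfold cns_solution in Hsol. cbv zeta in Hsol.
  destruct Hsol as (Hper & Hperu & Hpos & Hinit & Hinitu & Hcr & Hcu & Hdr & Hdu & Hexdt &
                    Hcdt & Hexdtu & Hd2 & Hcont & Hmom).
  clear Huniq Hmax Hmom Hd2 Hexdtu Hcdt Hinitu Hinit Hperu Hcu.
  set (q := fun t => real (LinfD u t) ^ 2) in *.
  set (g := fun s => (1 + 3 * q s) / 2).
  set (G := fun t => RInt g 0 t + t).
  assert (Hq0 : forall s, 0 <= q s) by (intros; apply pow2_ge_0).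
  assert (Hg0 : forall s, 0 <= g s) by (intros; unfold g; specialize (Hq0 s); lra).
  assert (Hexg : forall a b, 0 <= a <= b -> b < Tbar -> ex_RInt g a b).
  { intros a b H1 H2. apply (ex_sub g a b b); [lra|lra|]. apply ex_g. apply Hint. lra. }
  assert (Hmono : forall a b, 0 <= a <= b -> b < Tbar -> RInt q 0 a <= RInt q 0 b).
  { intros a b H1 H2. rewrite (RInt_split q a b); [|lra|apply Hint; lra].
    assert (0 <= RInt q a b); [|lra].
    apply RInt_ge_0; [lra| |intros; apply Hq0].
    apply (ex_sub q a b b); [lra|lra|apply Hint; lra]. }
  assert (HC0 : forall T, 0 <= T < Tbar -> RInt q 0 T <= C0).
  { intros T HT'. destruct (Rle_dec (RInt q 0 T) C0) as [h|h]; [exact h|exfalso].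
    apply Rnot_le_lt in h.
    set (ep := mkposreal _ (Rlt_Rminus _ _ h)).
    assert (Hl2 : locally C0 (fun r => ball C0 ep r)) by (exists ep; auto).
    destruct (Hlim _ Hl2) as [dl Hdl].
    set (y := Rmax T (Tbar - dl / 2)).
    assert (Hy : T <= y < Tbar).
    { unfold y. split; [apply Rmax_l|]. apply Rmax_lub_lt; [lra|]. pose proof (cond_pos dl); lra. }
    assert (Hb' : ball Tbar dl y).
    { change (Rabs (y - Tbar) < dl). apply Rabs_def1.
      - pose proof (cond_pos dl). lra.
      - unfold y. pose proof (Rmax_r T (Tbar - dl / 2)). pose proof (cond_pos dl). lra. }
    specialize (Hdl y Hb' (proj2 Hy)).
    change (Rabs (RInt q 0 y - C0) < RInt q 0 T - C0) in Hdl.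
    specialize (Hmono T y ltac:(lra) (proj2 Hy)).
    apply Rabs_def2 in Hdl. unfold q in *. lra. }
  set (Kc := Tbar / 2 + 3 / 2 * C0 + Tbar).
  assert (HGK : forall t, 0 <= t < Tbar -> G t <= Kc).
  { intros t Ht. unfold G, g, Kc. rewrite RInt_g by (apply Hint; lra).
    specialize (HC0 t Ht). lra. }
  assert (Hdiv : forall s x y z, 0 <= s < Tbar -> Rabs (divu u s x y z) <= g s).
  { intros s x y z Hs. apply divu_bound. apply Hfin. exact Hs. }
  assert (HGd : forall a b, 0 <= a <= b -> b < Tbar -> G b - G a = RInt g a b + (b - a)).
  { intros a b H1 H2. unfold G. rewrite (RInt_split g a b); [lra|lra|]. apply Hexg; lra. }
  assert (HGc : forall t1, 0 <= t1 < Tbar -> exists M, 0 <= M /\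
             forall a b, 0 <= a <= b -> b <= t1 -> G b - G a <= M * (b - a)).
  { intros t1 Ht1. destruct (ex_RInt_ub g 0 t1 (Hexg 0 t1 ltac:(lra) ltac:(lra))) as [M HM].
    exists (Rabs M + 1). split; [pose proof (Rabs_pos M); lra|].
    intros a b H1 H2. rewrite HGd by lra.
    assert (RInt g a b <= (b - a) * Rabs M); [|nra].
    eapply Rle_trans; [apply Rle_abs|].
    apply abs_RInt_le_const; [lra|apply Hexg; lra|].
    intros s Hs. eapply Rle_trans; [|apply Rle_abs]. apply HM.
    rewrite Rmin_left, Rmax_right by lra. lra. }
  assert (HGm : forall a b, 0 <= a <= b -> b < Tbar -> G a <= G b).
  { intros a b H1 H2. specialize (HGd a b H1 H2).
    assert (0 <= RInt g a b); [|lra]. apply RInt_ge_0; [lra|apply Hexg; lra|intros; apply Hg0]. }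
  assert (Claim : forall sg, sg = 1 \/ sg = -1 -> exists m, forall t x y z, 0 <= t < Tbar ->
             m <= sg * ln (rho t x y z) + G t).
  { intros sg Hsg.
    set (phi := fun t x y z => sg * ln (rho t x y z) + G t).
    assert (Hlsc : forall t1, 0 <= t1 < Tbar -> lsc_on phi (inb 0 0 0 0 t1 1 1 1)).
    { intros t1 Ht1 t x y z Hbx eps He.
      destruct Hbx as [Ht [Hx [Hy Hz]]].
      assert (Hr : 0 < rho t x y z) by (apply Hpos; lra).
      destruct (ln_cont _ Hr (eps / 2) ltac:(lra)) as [al [Hal Hln]].
      destruct (Hcr t x y z ltac:(lra) (mkposreal al Hal)) as [d1 Hd1].
      destruct (HGc t1 Ht1) as [M [HM HMb]].
      assert (Hd2 : 0 < eps / 2 / (M + 1)) by (apply Rdiv_lt_0_compat; lra).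
      exists (Rmin d1 (eps / 2 / (M + 1))). split.
      { apply Rmin_glb_lt; auto. apply cond_pos. }
      intros t' x' y' z' Hb' H1 H2 H3 H4.
      destruct Hb' as [Ht' [Hx' [Hy' [Hz']]]].
      pose proof (Rmin_l d1 (eps / 2 / (M + 1))). pose proof (Rmin_r d1 (eps / 2 / (M + 1))).
      assert (Hrr : Rabs (rho t' x' y' z' - rho t x y z) < al).
      { apply (Hd1 t' x' y' z'); try lra. }
      specialize (Hln _ Hrr).
      assert (Hs : Rabs (sg * ln (rho t' x' y' z') - sg * ln (rho t x y z)) < eps / 2).
      { rewrite <- Rmult_minus_distr_l, Rabs_sig_eq; auto. }
      assert (HG : G t - eps / 2 <= G t').
      { destruct (Rle_dec t t') as [h|h].
        - pose proof (HGm t t' ltac:(lra) ltac:(lra)). lra.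
        - specialize (HMb t' t ltac:(lra) ltac:(lra)).
          apply Rabs_def2 in H1.
          assert (M * (t - t') <= (M + 1) * (t - t')) by nra.
          assert ((M + 1) * (t - t') < (M + 1) * (eps / 2 / (M + 1))).
          { apply Rmult_lt_compat_l; lra. }
          replace ((M + 1) * (eps / 2 / (M + 1))) with (eps / 2) in H7 by (field; lra).
          lra. }
      apply Rabs_def2 in Hs. unfold phi. lra. }
    destruct (min4 phi 0 0 0 0 0 1 1 1 ltac:(lra) ltac:(lra) ltac:(lra) ltac:(lra) (Hlsc 0 ltac:(lra)))
      as [t0 [x0 [y0 [z0 [Hb0 Hmin0]]]]].
    exists (phi t0 x0 y0 z0).
    intros t x y z Ht.
    destruct (min4 phi 0 0 0 0 t 1 1 1 ltac:(lra) ltac:(lra) ltac:(lra) ltac:(lra) (Hlsc t Ht))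
      as [ts [xs [ys [zs [Hbs Hmins]]]]].
    destruct (per_red rho Hper t x y z) as [x' [y' [z' [Hx' [Hy' [Hz' Er]]]]]].
    assert (Ep : phi t x y z = phi t x' y' z') by (unfold phi; rewrite Er; reflexivity).
    change (phi t0 x0 y0 z0 <= phi t x y z). rewrite Ep.
    apply Rle_trans with (phi ts xs ys zs); [|apply Hmins; unfold inb; lra].
    destruct Hbs as [Hts [Hxs [Hys Hzs]]].
    destruct (Req_dec ts 0) as [E0|E0].
    { subst ts. apply Hmin0. unfold inb. lra. }
    exfalso.
    assert (Hts' : 0 < ts < Tbar) by lra.
    assert (Hsp : forall x y z, phi ts xs ys zs <= phi ts x y z).
    { intros x1 y1 z1. destruct (per_red rho Hper ts x1 y1 z1) as [a1 [b1 [c1 [Ha1 [Hb1 [Hc1 E1]]]]]].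
      assert (Ep1 : phi ts x1 y1 z1 = phi ts a1 b1 c1) by (unfold phi; rewrite E1; reflexivity).
      rewrite Ep1. apply Hmins. unfold inb; lra. }
    set (r := rho ts xs ys zs).
    assert (Hr : 0 < r) by (apply Hpos; lra).
    assert (Hz0 : dx 0 rho ts xs ys zs = 0).
    { apply (deriv_zero_ln sg (fun s => rho ts s ys zs) xs Hsg Hr).
      - apply (proj1 (Hdr 0%nat ltac:(lia))). lra.
      - intros s. specialize (Hsp s ys zs). unfold phi in Hsp. lra. }
    assert (Hz1 : dx 1 rho ts xs ys zs = 0).
    { apply (deriv_zero_ln sg (fun s => rho ts xs s zs) ys Hsg Hr).
      - apply (proj1 (Hdr 1%nat ltac:(lia))). lra.
      - intros s. specialize (Hsp xs s zs). unfold phi in Hsp. lra. }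
    assert (Hz2 : dx 2 rho ts xs ys zs = 0).
    { apply (deriv_zero_ln sg (fun s => rho ts xs ys s) zs Hsg Hr).
      - apply (proj1 (Hdr 2%nat ltac:(lia))). lra.
      - intros s. specialize (Hsp xs ys s). unfold phi in Hsp. lra. }
    set (dv := divu u ts xs ys zs).
    assert (Hce := Hcont ts xs ys zs Hts').
    unfold sum3 in Hce. cbv beta in Hce.
    assert (Er0 : ex_dx 0 rho ts xs ys zs) by (apply (proj1 (Hdr 0%nat ltac:(lia))); lra).
    assert (Eu0 : ex_dx 0 (u 0%nat) ts xs ys zs) by (apply (proj1 (Hdu 0%nat 0%nat ltac:(lia) ltac:(lia))); lra).

    rewrite (dx_mult 0 rho (u 0%nat) ts xs ys zs Er0 Eu0) in Hce.
    assert (Er1 : ex_dx 1 rho ts xs ys zs) by (apply (proj1 (Hdr 1%nat ltac:(lia))); lra).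
    assert (Eu1 : ex_dx 1 (u 1%nat) ts xs ys zs) by (apply (proj1 (Hdu 1%nat 1%nat ltac:(lia) ltac:(lia))); lra).

    rewrite (dx_mult 1 rho (u 1%nat) ts xs ys zs Er1 Eu1) in Hce.
    assert (Er2 : ex_dx 2 rho ts xs ys zs) by (apply (proj1 (Hdr 2%nat ltac:(lia))); lra).
    assert (Eu2 : ex_dx 2 (u 2%nat) ts xs ys zs) by (apply (proj1 (Hdu 2%nat 2%nat ltac:(lia) ltac:(lia))); lra).

    rewrite (dx_mult 2 rho (u 2%nat) ts xs ys zs Er2 Eu2) in Hce.
    rewrite Hz0, Hz1, Hz2 in Hce. fold r in Hce.
    assert (Edv : dv = dx 0 (u 0%nat) ts xs ys zs + dx 1 (u 1%nat) ts xs ys zs + dx 2 (u 2%nat) ts xs ys zs)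
      by reflexivity.
    assert (Edt : dt rho ts xs ys zs = - r * dv) by (rewrite Edv; lra).
    set (k := fun s => sg * ln (rho s xs ys zs)).
    set (d := - sg * dv).
    assert (Hk : derivable_pt_lim k ts d).
    { apply is_derive_Reals.
      replace d with (sg * (Derive (fun s => rho s xs ys zs) ts * / r)).
      - apply is_derive_scal.
        apply (is_derive_comp ln (fun s => rho s xs ys zs) ts (/ r)).
        + apply is_derive_Reals. apply derivable_pt_lim_ln. exact Hr.
        + apply Derive_correct. apply Hexdt. lra.
      - change (Derive (fun s => rho s xs ys zs) ts) with (dt rho ts xs ys zs).
        rewrite Edt. unfold d. field. lra. }
    assert (Hsix : 0 < 1/6) by lra.
    destruct (Hk (1/4) ltac:(lra)) as [dl Hdl].
    destruct (proj2 (Hdu 0%nat 0%nat ltac:(lia) ltac:(lia)) ts xs ys zs ltac:(lra) (mkposreal (1/6) Hsix)) as [e0 He0].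
    destruct (proj2 (Hdu 1%nat 1%nat ltac:(lia) ltac:(lia)) ts xs ys zs ltac:(lra) (mkposreal (1/6) Hsix)) as [e1 He1].
    destruct (proj2 (Hdu 2%nat 2%nat ltac:(lia) ltac:(lia)) ts xs ys zs ltac:(lra) (mkposreal (1/6) Hsix)) as [e2 He2].
    destruct (five_min dl e0 e1 e2 ts (cond_pos dl) (cond_pos e0) (cond_pos e1) (cond_pos e2) ltac:(lra))
      as [h [Hh0 [Hh1 [Hh2 [Hh3 [Hh4 Hh5]]]]]].
    assert (Hgs : forall s, ts - h < s < ts -> sg * dv - 1/2 <= g s).
    { intros s Hs.
      assert (Hab0 : Rabs (s - ts) < h) by (apply Rabs_def1; lra).
      assert (Z0 : Rabs (xs - xs) < h) by (rewrite Rminus_diag, Rabs_R0; lra).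
      assert (Z1 : Rabs (ys - ys) < h) by (rewrite Rminus_diag, Rabs_R0; lra).
      assert (Z2 : Rabs (zs - zs) < h) by (rewrite Rminus_diag, Rabs_R0; lra).
      specialize (He0 s xs ys zs ltac:(lra) ltac:(lra) ltac:(lra) ltac:(lra) ltac:(lra)).
      specialize (He1 s xs ys zs ltac:(lra) ltac:(lra) ltac:(lra) ltac:(lra) ltac:(lra)).
      specialize (He2 s xs ys zs ltac:(lra) ltac:(lra) ltac:(lra) ltac:(lra) ltac:(lra)).
      change (pos (mkposreal (1/6) Hsix)) with (1/6) in He0, He1, He2.
      apply Rabs_def2 in He0. apply Rabs_def2 in He1. apply Rabs_def2 in He2.
      assert (Eds : divu u s xs ys zs = dx 0 (u 0%nat) s xs ys zs + dx 1 (u 1%nat) s xs ys zs + dx 2 (u 2%nat) s xs ys zs)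
        by reflexivity.
      pose proof (Hdiv s xs ys zs ltac:(lra)) as Hb1.
      pose proof (Rabs_sig sg (divu u s xs ys zs) Hsg) as Hb2.
      destruct Hsg as [-> | ->]; lra. }
    assert (HRI : (ts - (ts - h)) * (sg * dv - 1/2) <= RInt g (ts - h) ts).
    { apply RInt_lower; [lra| apply Hexg; lra | exact Hgs]. }
    pose proof (HGd (ts - h) ts ltac:(lra) ltac:(lra)) as HGd1.
    assert (Hmn : phi ts xs ys zs <= phi (ts - h) xs ys zs) by (apply Hmins; unfold inb; lra).
    specialize (Hdl (- h) ltac:(lra) ltac:(rewrite Rabs_Ropp, Rabs_pos_eq; lra)).
    replace (ts + - h) with (ts - h) in Hdl by ring.
    set (Q := (k (ts - h) - k ts) / - h) in Hdl.
    assert (EQ : k (ts - h) - k ts = - h * Q) by (unfold Q; field; lra).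
    apply Rabs_def2 in Hdl.
    assert (HhQ : h * (d - 1/4) < h * Q) by (apply Rmult_lt_compat_l; lra).
    unfold phi in Hmn. fold (k ts) (k (ts - h)) in Hmn.
    replace ((ts - (ts - h)) * (sg * dv - 1/2)) with (h * (sg * dv) - h / 2) in HRI by field.
    assert (Ed : d = - sg * dv) by reflexivity. rewrite Ed in HhQ.
    replace (h * (- sg * dv - 1/4)) with (- (h * (sg * dv)) - h / 4) in HhQ by field.
    lra. }
  destruct (Claim 1 ltac:(lra)) as [m1 Hm1].
  destruct (Claim (-1) ltac:(lra)) as [m2 Hm2].
  exists (exp (Kc - m1) + exp (Kc - m2)).
  pose proof (exp_pos (Kc - m1)). pose proof (exp_pos (Kc - m2)).
  split; [lra|].
  intros t x y z Ht.
  specialize (Hm1 t x y z Ht). specialize (Hm2 t x y z Ht). specialize (HGK t Ht).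
  pose proof (Hpos t x y z Ht) as Hr.
  rewrite <- (exp_ln _ Hr).
  split.
  - apply Rle_trans with (exp (m1 - Kc)).
    + replace (m1 - Kc) with (- (Kc - m1)) by ring. rewrite exp_Ropp.
      apply Rinv_le_contravar; [auto|lra].
    + apply exp_le. lra.
  - apply Rle_trans with (exp (Kc - m2)); [apply exp_le; lra|lra].
Qed.
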